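(* Let $Ab_0$ denote the class of all finite abelian groups, and define $f:Ab_0\to(0,\infty)$ by $f(G)=\frac{|\mathrm{Aut}(G)|}{|G|}$, where $\mathrm{Aut}(G)$ is the automorphism group of $G$. Then the set $\mathrm{Im}(f)\cap[0,1]$, where $\mathrm{Im}(f)=\{f(G)\mid G\in Ab_0\}$, is dense in $[0,1]$. *)

(* Defs.v *)
From HB Require Import structures.
From mathcomp Require Import all_boot all_order all_algebra all_fingroup.
From mathcomp Require Import reals.
Set Implicit Arguments. Unset Strict Implicit. Unset Printing Implicit Defensive.
Import Order.TTheory GRing.Theory Num.Theory.
Local Open Scope ring_scope.

(* f(G) = |Aut(G)| / |G|, as a real number in R. [Aut G] is MathComp's
   automorphism group of G (permutations of gT supported on G that restrict
   to group automorphisms of G); its cardinality is the number of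
   automorphisms of G. *)
Definition aut_ratio (R : realType) (gT : finGroupType) (G : {group gT}) : R :=
  (#|Aut G|%:R / #|G|%:R).

(* Main.v *)
Require Import Defs.
From HB Require Import structures.
From mathcomp Require Import all_boot all_order all_algebra all_fingroup.
From mathcomp Require Import reals.
From mathcomp Require Import all_solvable zify ring lra.
Import Order.TTheory GRing.Theory Num.Theory.


Lemma count_periodic a b : 0 < a ->
  \sum_(0 <= d < a * b) coprime a d = b * totient a.
Proof.
move=> a0; rewrite totient_count_coprime; elim: b => [|b IH]; first by rewrite muln0 big_geq.
rewrite mulnS addnC (@big_cat_nat _ _ _ (a * b)) ?leq_addr //= IH mulSn addnC; congr (_ + _).
rewrite -{1}[a * b]add0n big_addn addKn; apply: eq_bigr => i _.
by rewrite -coprime_modr [i + _]addnC [a * b]mulnC modnMDl coprime_modr.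
Qed.

Lemma totient_dvd_le d n : 0 < n -> d %| n -> totient n * d <= n * totient d.
Proof.
move=> n0 dn; have d0 : 0 < d by apply: dvdn_gt0 dn.
have -> : n = d * (n %/ d) by rewrite mulnC divnK.
move: (n %/ d) => e.
suff H : totient (d * e) <= e * totient d.
  have := leq_mul H (leqnn d); rewrite -mulnA [totient d * d]mulnC mulnA [e * d]mulnC //.
rewrite totient_count_coprime -(@count_periodic d e d0).
apply: leq_sum => i _.
by rewrite coprimeMl; case: (coprime d i); case: (coprime e i).
Qed.

Lemma sum_totient_divs n M : 0 < n -> (forall k, 0 < k <= M -> k %| n) ->
  \sum_(k < M) totient (n %/ k.+1) <= n.
Proof.
move=> n0 hd.
have kd : forall k : 'I_M, k.+1 %| n by move=> k; apply: hd; rewrite ltn_ord.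
pose h := fun k : 'I_M => (inord (n %/ k.+1) : 'I_n.+1).
have hE : forall k, nat_of_ord (h k) = n %/ k.+1.
  by move=> k; rewrite inordK // ltnS leq_div.
have hinj : {in [set: 'I_M] &, injective h}.
  move=> k1 k2 _ _ /(congr1 val); rewrite /= !hE => e.
  have q0 : 0 < n %/ k1.+1 by rewrite divn_gt0 // dvdn_leq.
  apply: val_inj => /=; apply/eqP; rewrite -eqSS -(eqn_pmul2r q0).
  by rewrite [k1.+1 * _]mulnC divnK ?kd // e mulnC divnK ?kd.
rewrite -[X in _ <= X]sum_totient_dvd.
rewrite (eq_bigr (fun k => totient (h k))); last by move=> k _; rewrite hE.
rewrite (eq_bigl (fun k => k \in [set: 'I_M])); last by move=> k; rewrite inE.
rewrite -(big_imset (fun d : 'I_n.+1 => totient d) hinj) /=.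
rewrite [X in _ <= X](bigID (fun d => d \in h @: [set: 'I_M])) /=.
apply: leq_trans (leq_addr _ _); rewrite leq_eqVlt; apply/orP; left; apply/eqP.
apply: eq_bigl => d; case: (boolP (d \in _)) => [/imsetP [k _ ->]|]; last by rewrite andbF.
by rewrite andbT hE -{2}(divnK (kd k)) dvdn_mulr.
Qed.

Lemma totient_harm_nat n M : 0 < n -> (forall k, 0 < k <= M -> k %| n) ->
  totient n * \sum_(k < M) n %/ k.+1 <= n * n.
Proof.
move=> n0 hd; rewrite big_distrr /=.
apply: leq_trans (_ : n * \sum_(k < M) totient (n %/ k.+1) <= _); last first.
  by rewrite leq_mul2l sum_totient_divs ?orbT.
rewrite big_distrr /=; apply: leq_sum => k _.
have kd : k.+1 %| n by apply: hd; rewrite ltn_ord.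
apply: totient_dvd_le => //.
by rewrite -{2}(divnK kd) dvdn_mulr.
Qed.

Section Real.
Variable R : realType.
Local Open Scope ring_scope.

Definition rt (n : nat) : R := (totient n)%:R / n%:R.
Definition harm (M : nat) : R := \sum_(0 <= k < M) (k.+1)%:R^-1.

Lemma rt_harm n M : (0 < n)%N -> (forall k, (0 < k <= M)%N -> (k %| n)%N) ->
  rt n * harm M <= 1.
Proof.
move=> n0 hd; have := @totient_harm_nat n M n0 hd.
rewrite -(ler_nat R) !natrM natr_sum.
have -> : \sum_(k < M) ((n %/ k.+1)%N)%:R = n%:R * harm M :> R.
  rewrite /harm big_mkord big_distrr /=; apply: eq_bigr => k _.
  rewrite natr_div ?unitfE ?pnatr_eq0 //; apply: hd; exact: (ltn_ord k).
have nR : (0 : R) < n%:R by rewrite ltr0n.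
move=> h; rewrite /rt mulrAC ler_pdivrMr // mul1r.
by rewrite -(ler_pM2r nR) -mulrA [harm M * _]mulrC.
Qed.

Lemma rt_primes n : (0 < n)%N -> rt n = \prod_(p <- primes n) (1 - p%:R^-1).
Proof.
move=> n0; rewrite /rt totientE //.
have E : (n%:R : R) = (\prod_(p <- primes n) p ^ logn p n)%:R by rewrite {1}(prod_prime_decomp n0) prime_decompE big_map.
rewrite E !natr_prod -prodf_div.
rewrite big_seq [RHS]big_seq; apply: eq_bigr => p pP.
have p0 : (0 < p)%N by apply: prime_gt0; move: pP; rewrite mem_primes => /andP[].
have l0 : (0 < logn p n)%N by rewrite logn_gt0.
rewrite -{2}(prednK l0) expnS !natrM.
have pR : (p%:R : R) != 0 by rewrite pnatr_eq0 -lt0n.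
have eR : ((p ^ (logn p n).-1)%N%:R : R) != 0 by rewrite pnatr_eq0 -lt0n expn_gt0 p0.
have q : (p.-1%:R : R) = p%:R - 1 by rewrite -{2}(prednK p0) mulrSr addrK.
by rewrite q; field; rewrite pR eR.
Qed.

Definition Q (S : pred nat) (M : nat) : R :=
  \prod_(0 <= p < M.+1 | prime p && S p) (1 - p%:R^-1).

Lemma rt_Q n (S : pred nat) M : (0 < n)%N ->
  (forall p, prime p -> (p %| n)%N = (p <= M)%N && S p) -> rt n = Q S M.
Proof.
move=> n0 hP; rewrite rt_primes // -(@filter_pi_of n (maxn n M).+1) ?ltnS ?leq_maxl //.
rewrite big_filter /Q (@big_nat_widen _ _ _ 0 M.+1 (maxn n M).+1) ?ltnS ?leq_maxr //.
apply: eq_bigl => p; rewrite /pi_of /= mem_primes n0 /=.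
case pp: (prime p) => //=; rewrite hP // ltnS andbC //.
Qed.

Lemma harm_pow m : m%:R / 2 <= harm (2 ^ m).
Proof.
elim: m => [|m IH]; first by rewrite mul0r /harm; apply: sumr_ge0 => k _; rewrite invr_ge0 ler0n.
rewrite /harm (@big_cat_nat _ _ _ (2 ^ m)) //=; last by rewrite leq_pexp2l.
have h2 : (2 ^ m.+1 - 2 ^ m = 2 ^ m)%N by rewrite expnS mul2n -addnn addnK.
have : \sum_(2 ^ m <= k < 2 ^ m.+1) ((2 ^ m.+1)%:R^-1 : R) <=
       \sum_(2 ^ m <= k < 2 ^ m.+1) (k.+1)%:R^-1.
  apply: ler_sum_nat => k /andP[_ hk].
  by rewrite lef_pV2 ?posrE ?ltr0n ?expn_gt0 // ler_nat.
rewrite sumr_const_nat h2 => hb.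
have e : ((2 ^ m.+1)%:R^-1 *+ 2 ^ m : R) = 2^-1.
  rewrite -mulr_natr expnS natrM; field; by rewrite pnatr_eq0 expn_eq0.
rewrite e in hb; have -> : (m.+1%:R : R) = m%:R + 1 by rewrite -addn1 natrD.
rewrite mulrDl; apply: lerD => //; by rewrite mul1r.
Qed.

Lemma Q0 S : Q S 0 = 1.
Proof. by rewrite /Q big_mkcond big_nat1. Qed.

Lemma QS S M : Q S M.+1 =
  (if prime M.+1 && S M.+1 then Q S M * (1 - (M.+1)%:R^-1) else Q S M).
Proof.
by rewrite /Q big_mkcond big_nat_recr //= -big_mkcond; case: ifP; rewrite ?mulr1.
Qed.

Lemma factor_bnd p : prime p -> (0 : R) < 1 - (p%:R : R)^-1 <= 1.
Proof.
move=> pp; have p1 : 1 < p%:R :> R by rewrite ltr1n prime_gt1.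
have p0 : 0 < p%:R :> R by rewrite ltr0n prime_gt0.
by rewrite subr_gt0 invf_lt1 // p1 /= lerBlDr lerDl invr_ge0 ltW.
Qed.

Lemma Q_bnd S M : 0 < Q S M <= 1.
Proof.
apply/andP; split.
  by apply: prodr_gt0 => p /andP[pp _]; case/andP: (factor_bnd p pp).
apply: prodr_ile1 => p /andP[pp _]; case/andP: (factor_bnd p pp) => /ltW -> ->.
by [].
Qed.

Lemma Q_split K M : (K <= M)%N ->
  Q predT M = Q predT K * Q (fun p => K < p)%N M.
Proof.
move=> KM; rewrite /Q (bigID (fun p => K < p)%N) /= mulrC; congr (_ * _).
rewrite (@big_nat_widen _ _ _ 0 K.+1 M.+1) ?ltnS //; apply: eq_bigl => p.
  by rewrite ltnS ltnNge negbK.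
by apply: eq_bigl => p; rewrite andbT.
Qed.

Lemma Q_step K M : Q (fun p => K < p)%N M.+1 <= Q (fun p => K < p)%N M /\
  Q (fun p => K < p)%N M - Q (fun p => K < p)%N M.+1 <= (K.+1)%:R^-1.
Proof.
rewrite QS; case: ifP => [/andP[pp KM]|_]; last by rewrite subrr invr_ge0 ler0n.
have /andP[q0 q1] := Q_bnd (fun p => K < p)%N M.
have /andP[f0 f1] := factor_bnd _ pp.
split; first by rewrite ger_pMr.
rewrite mulrBr mulr1 opprB addrC subrK.
apply: le_trans (_ : 1 * (M.+1)%:R^-1 <= _).
  by rewrite ler_wpM2r // ?invr_ge0 ?ler0n.
by rewrite mul1r lef_pV2 ?posrE ?ltr0n // ler_nat.
Qed.
End Real.

Lemma prime_dvd_fact p M : prime p -> (p %| M`!) = (p <= M).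
Proof.
move=> pp; elim: M => [|M IH]; first by rewrite fact0 Euclid_dvd1 // leqn0 (gtn_eqF (prime_gt0 pp)).
rewrite factS Euclid_dvdM // IH; apply/orP/idP => [[h|h]|h].
- by apply: dvdn_leq.
- exact: leqW.
case: (leqP p M) => hm; [by right | left].
have -> : p = M.+1 by apply/eqP; rewrite eqn_leq h hm.
exact: dvdnn.
Qed.

Definition N K M := \prod_(0 <= p < M.+1 | prime p && (K < p)) p.

Lemma N_gt0 K M : 0 < N K M.
Proof. by apply: prodn_cond_gt0 => p /andP[pp _]; apply: prime_gt0. Qed.

Lemma prime_dvd_N p K M : prime p -> (p %| N K M) = (p <= M) && (K < p).
Proof.
move=> pp; elim: M => [|M IH].
  by rewrite /N big_mkcond big_nat1 /= Euclid_dvd1 // leqn0 (gtn_eqF (prime_gt0 pp)).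
rewrite /N big_mkcond big_nat_recr //= -big_mkcond -/(N K M).
case: ifP => [/andP[qp KM]|hc].
  rewrite Euclid_dvdM // IH dvdn_prime2 //.
  case: (ltngtP p M.+1) => h; rewrite ?andbF ?orbF /=.
  - by rewrite -ltnS h.
  - by rewrite [p <= M]leqNgt ltnW.
  - by rewrite orbT h KM.
rewrite muln1 IH; case: (ltngtP p M.+1) => h.
- have h' : p <= M by rewrite -ltnS.
  by rewrite h'.
- by rewrite leqNgt (ltnW h).
- rewrite h ltnn /=; rewrite h in pp; move: hc; rewrite pp /= => ->; done.
Qed.

Local Open Scope ring_scope.


Lemma group_ratio (R : realType) m : exists (gT : finGroupType) (G : {group gT}),
  abelian G /\ aut_ratio R G = (totient m.+1)%:R / (m.+1)%:R.
Proof.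
exists ('I_m.+1 : finGroupType).
exists <[Zp1 : 'I_m.+1]>%G; split; first exact: cycle_abelian.
rewrite /aut_ratio /= card_Aut_cycle.
have E := @order_Zp1 m. rewrite /order in E *. by rewrite E.
Qed.

Theorem lemma2p1 (R : realType) (x eps : R) :
  0 <= x <= 1 -> 0 < eps ->
  exists (gT : finGroupType) (G : {group gT}),
    [/\ abelian G, aut_ratio R G <= 1 & `|x - aut_ratio R G| < eps].
Proof.
move=> /andP[x0 x1] e0.
have [K hK] : exists K : nat, ((K.+1)%:R : R)^-1 < eps.
  have ie0 : 0 <= eps^-1 by rewrite invr_ge0 ltW.
  have hb := archi_boundP ie0; exists (Num.bound eps^-1); move: hb; set b := Num.bound _ => hb.
  rewrite -[eps]invrK ltf_pV2 ?posrE ?ltr0n ?invr_gt0 //.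
  by apply: (lt_trans hb); rewrite ltr_nat.
pose QK := Q R (fun p => K < p)%N.
pose c0 := Q R predT K.
have c0p : 0 < c0 by case/andP: (Q_bnd R predT K).
have [m [hm Km]] : exists m : nat, 2 / (eps * c0) < m%:R /\ (K <= m)%N.
  have ie0 : 0 <= 2 / (eps * c0) by rewrite divr_ge0 // ltW // mulr_gt0.
  exists (Num.bound (2 / (eps * c0)) + K)%N; split; last exact: leq_addl.
  apply: lt_le_trans (archi_boundP ie0) _; by rewrite ler_nat leq_addr.
pose M0 := (2 ^ m)%N.
have KM0 : (K <= M0)%N by apply: leq_trans Km (ltnW (ltn_expl _ _)).
have hM0 : QK M0 < eps.
  have e1 : Q R predT M0 = rt R M0`!.
    by symmetry; apply: rt_Q; [exact: fact_gt0 | move=> p pp; rewrite prime_dvd_fact // andbT].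
  have h1 := @rt_harm R M0`! M0 (fact_gt0 _) (fun k hk => dvdn_fact hk).
  have h2 := harm_pow R m.
  have hpos : 0 < harm R M0.
    apply: lt_le_trans h2; rewrite divr_gt0 //; apply: lt_trans hm.
    by rewrite divr_gt0 // mulr_gt0.
  have ec : 0 < eps * c0 by rewrite mulr_gt0.
  have h3 : rt R M0`! < eps * c0.
    have h4 : rt R M0`! <= 1 / harm R M0 by rewrite ler_pdivlMr.
    apply: le_lt_trans h4 _; rewrite ltr_pdivrMr //.
    have h5 : (eps * c0)^-1 < harm R M0.
      by apply: lt_le_trans h2; rewrite ltr_pdivlMr // mulrC.
    by rewrite -(ltr_pM2l ec) mulfV ?gt_eqF // in h5.
  rewrite -e1 (Q_split R K M0 KM0) -/c0 in h3.
  by rewrite -(ltr_pM2l c0p) [c0 * eps]mulrC.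
have [M hM] : exists M, `|x - QK M| < eps.
  case: (ltP x eps) => hx.
    exists M0; rewrite ltr_distlC; case/andP: (Q_bnd R (fun p => K < p)%N M0) => q0 q1.
    apply/andP; split; rewrite -/QK in q0 q1 *.
      by apply: le_lt_trans _ q0; rewrite subr_le0 ltW.
    by apply: lt_le_trans hM0 _; rewrite lerDr.
  have ex : exists M, QK M <= x by exists M0; apply: ltW (lt_le_trans hM0 hx).
  case: (ex_minnP ex) => M hMx hmin; exists M.
  case: M hMx hmin => [|M'] hMx hmin.
    rewrite /QK Q0 in hMx *; have -> : x = 1 by apply/le_anti; rewrite x1 hMx.
    by rewrite subrr normr0.
  have hlt : x < QK M'.
    rewrite ltNge; apply/negP => h; have := hmin _ h; by rewrite ltnn.
  have [_ hs] := Q_step R K M'; rewrite -/QK in hs.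
  rewrite ltr_distlC; move: (QK M') (QK M'.+1) hlt hs hMx hK => a b; move: (_%:R^-1) => c.
  move=> *; apply/andP; split; lra.
have n0 := N_gt0 K M.
have hr : rt R (N K M) = QK M.
  apply: rt_Q => // p pp; exact: prime_dvd_N.
have [gT [G [ab hG]]] := group_ratio R (N K M).-1.
exists gT, G; rewrite hG prednK // -/(rt R (N K M)) hr; split => //.
by case/andP: (Q_bnd R (fun p => K < p)%N M).
Qed.
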